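(* Let $a$ be a positive real number. For $n\ge1$ let $D_n(a,1)$ be the $n\times n$ matrix whose $(i,j)$ entry is $-a$ if $i=j$, $1$ if $j=i+1$, $a$ if $i=j+1$, $-1$ if $i=j+2$, and $0$ otherwise; set $d_{-1}=0$, $d_0=1$ and $d_n=|D_n(a,1)|$ for $n\ge1$. Let $E_n(a,1)$ be the $(n+1)\times n$ matrix whose $(i,j)$ entry is $-a$ if $i=j$, $1$ if $j=i+1$, $a$ if $i=j+1$, $-1$ if $i=j+2$, and $0$ otherwise, and for $1\le k\le n+1$ let $E_n^k(a,1)$ be obtained from $E_n(a,1)$ by deleting its $k$-th row. Then for $1\le k\le n+1$, $$|E_n^k(a,1)|=(-1)^{n-k+1}(d_{k-1}d_{n-k+1}-d_{k-2}d_{n-k}),$$ and for every $k\ge0$, $$d_k=\frac{1}{k!}\frac{d^k}{dx^k}\left(\frac{1}{1+ax+ax^2+x^3}\right)\Big|_{x=0}.$$ Moreover, if $x^3+ax^2+ax+1=0$ has three distinct (complex) solutions $\alpha,\beta,\gamma$, then for $k\ge1$ $$d_k=\frac{1}{\alpha^{k+1}(\alpha-\beta)(\gamma-\alpha)}+\frac{1}{\beta^{k+1}(\alpha-\beta)(\beta-\gamma)}+\frac{1}{\gamma^{k+1}(\gamma-\alpha)(\beta-\gamma)}.$$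
   Context: $|M|$ denotes the determinant of a square matrix $M$. *)

(* Defs.v *)
From HB Require Import structures.
From mathcomp Require Import all_boot all_order all_algebra.
From mathcomp Require Import all_classical all_reals all_analysis.
From mathcomp Require Import complex.
Set Implicit Arguments. Unset Strict Implicit. Unset Printing Implicit Defensive.
Import Order.TTheory GRing.Theory Num.Theory.
Local Open Scope ring_scope.

(* Entry pattern shared by D_n(a,1) and E_n(a,1); indices are 0-based here,
   which does not matter since only index differences are involved. *)
Definition ent {R : ringType} (a : R) (i j : nat) : R :=
  if i == j then - a
  else if j == i.+1 then 1
  else if i == j.+1 then a
  else if i == j.+2 then -1
  else 0.

Definition Dmat {R : ringType} (a : R) (n : nat) : 'M[R]_n :=
  \matrix_(i < n, j < n) ent a i j.

Definition Emat {R : ringType} (a : R) (n : nat) : 'M[R]_(n.+1, n) :=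
  \matrix_(i < n.+1, j < n) ent a i j.

(* E_n^k(a,1), k 1-based (1 <= k <= n+1): delete the k-th row *)
Definition Ekmat {R : ringType} (a : R) (n k : nat) : 'M[R]_n :=
  row' (inord k.-1 : 'I_n.+1) (Emat a n).

Definition dd {R : comRingType} (a : R) (m : int) : R :=
  match m with
  | Posz 0 => 1
  | Posz n => \det (Dmat a n)
  | Negz _ => 0
  end.

(* Main.v *)
Require Import Defs.
From HB Require Import structures.
From mathcomp Require Import all_boot all_order all_algebra.
From mathcomp Require Import all_classical all_reals all_analysis.
From mathcomp Require Import complex.
From mathcomp Require Import zify ring lra.
Set Implicit Arguments. Unset Strict Implicit. Unset Printing Implicit Defensive.
Import Order.TTheory GRing.Theory Num.Theory.
Local Open Scope ring_scope.
Section Det.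
Variable R : comNzRingType.
Definition mk n (f : nat -> nat -> R) : 'M[R]_n := \matrix_(i < n, j < n) f i j.

Lemma eq_mk n f g : (forall i j, (i < n)%N -> (j < n)%N -> f i j = g i j) -> mk n f = mk n g.
Proof. by move=> H; apply/matrixP => i j; rewrite !mxE H. Qed.

Lemma det_mk_tr n f : \det (mk n f) = \det (mk n (fun i j => f j i)).
Proof. by rewrite -det_tr; congr (\det _); apply/matrixP => i j; rewrite !mxE. Qed.

Lemma expand_row_mk n f i0 : (i0 < n.+1)%N -> \det (mk n.+1 f) =
  \sum_(j < n.+1) f i0 j * ((-1) ^+ (i0 + j) * \det (mk n (fun x y => f (bump i0 x) (bump j y)))).
Proof.
move=> Hi; rewrite (expand_det_row _ (Ordinal Hi)); apply: eq_bigr => j _.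
rewrite /cofactor !mxE /=; congr (_ * (_ * \det _)).
by apply/matrixP => x y; rewrite !mxE.
Qed.

Lemma row1_mk n f i0 j0 : (i0 < n)%N -> (j0 < n)%N ->
  (forall j, (j < n)%N -> j != j0 -> f i0 j = 0) ->
  \det (mk n f) = f i0 j0 * ((-1) ^+ (i0 + j0) * \det (mk n.-1 (fun x y => f (bump i0 x) (bump j0 y)))).
Proof.
case: n => [//|n] Hi Hj H0; rewrite (expand_row_mk _ Hi) (bigD1 (Ordinal Hj)) //= big1 ?addr0 //.
move=> j /eqP Hne; rewrite H0 ?mul0r //; apply/eqP => E; apply: Hne; exact: val_inj.
Qed.

Lemma det_mk_split n f i0 u v : (i0 < n)%N -> (forall j, (j < n)%N -> f i0 j = u j + v j) ->
  \det (mk n f) = \det (mk n (fun i j => if i == i0 then u j else f i j))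
                + \det (mk n (fun i j => if i == i0 then v j else f i j)).
Proof.
move=> Hi H.
rewrite -[\det (mk n (fun i j => if i == i0 then u j else _))]mul1r.
rewrite -[\det (mk n (fun i j => if i == i0 then v j else _))]mul1r.
apply: (@determinant_multilinear _ _ _ _ _ (Ordinal Hi)).
- by apply/rowP => j; rewrite !mxE eqxx !mul1r H.
- apply/matrixP => i j; rewrite !mxE /= ifN //; rewrite eq_sym; exact: (neq_bump i0 i).
- apply/matrixP => i j; rewrite !mxE /= ifN //; rewrite eq_sym; exact: (neq_bump i0 i).
Qed.

Lemma det_lblock_rs r s f : (forall i j, (i < r)%N -> (r <= j)%N -> (j < r + s)%N -> f i j = 0) ->
  \det (mk (r + s) f) = \det (mk r f) * \det (mk s (fun i j => f (r + i)%N (r + j)%N)).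
Proof.
move=> H.
have -> : mk (r + s) f = block_mx (mk r f) 0 (\matrix_(i < s, j < r) f (r + i)%N j)
                                 (mk s (fun i j => f (r + i)%N (r + j)%N)).
  apply/matrixP => i j; rewrite !mxE.
  case: (splitP i) => i' Ei; rewrite !mxE; case: (splitP j) => j' Ej; rewrite !mxE /= ?Ei ?Ej //.
  apply: H; [exact: ltn_ord | exact: leq_addr | by rewrite -Ej ltn_ord].
exact: det_lblock.
Qed.

Lemma det_ublock_rs r s f : (forall i j, (j < r)%N -> (r <= i)%N -> (i < r + s)%N -> f i j = 0) ->
  \det (mk (r + s) f) = \det (mk r f) * \det (mk s (fun i j => f (r + i)%N (r + j)%N)).
Proof.
move=> H; rewrite det_mk_tr det_lblock_rs.
  by rewrite [\det (mk r f)]det_mk_tr [X in _ = _ * X]det_mk_tr.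
by move=> i j Hi Hj Hj'; apply: H.
Qed.

Lemma det_lblock_mk n r f : (r <= n)%N ->
  (forall i j, (i < r)%N -> (r <= j)%N -> (j < n)%N -> f i j = 0) ->
  \det (mk n f) = \det (mk r f) * \det (mk (n - r)%N (fun i j => f (r + i)%N (r + j)%N)).
Proof.
move=> Hr; have := subnKC Hr; move: (n - r)%N => s E; subst n.
exact: det_lblock_rs.
Qed.

Lemma det_ublock_mk n r f : (r <= n)%N ->
  (forall i j, (j < r)%N -> (r <= i)%N -> (i < n)%N -> f i j = 0) ->
  \det (mk n f) = \det (mk r f) * \det (mk (n - r)%N (fun i j => f (r + i)%N (r + j)%N)).
Proof.
move=> Hr; have := subnKC Hr; move: (n - r)%N => s E; subst n.
exact: det_ublock_rs.
Qed.

Lemma row1_col n f i0 j0 : (i0 < n)%N -> (j0 < n)%N ->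
  (forall i, (i < n)%N -> i != i0 -> f i j0 = 0) ->
  \det (mk n f) = f i0 j0 * ((-1) ^+ (i0 + j0) * \det (mk n.-1 (fun x y => f (bump i0 x) (bump j0 y)))).
Proof.
move=> Hi Hj H; rewrite det_mk_tr (row1_mk (i0:=j0) (j0:=i0)) //.
by rewrite det_mk_tr addnC.
Qed.

Lemma det_mk_split_col n f j0 u v : (j0 < n)%N -> (forall i, (i < n)%N -> f i j0 = u i + v i) ->
  \det (mk n f) = \det (mk n (fun i j => if j == j0 then u i else f i j))
                + \det (mk n (fun i j => if j == j0 then v i else f i j)).
Proof.
move=> Hj H; rewrite det_mk_tr (det_mk_split (i0:=j0) (u:=u) (v:=v)) //.
by rewrite [X in _ = X + _]det_mk_tr [X in _ = _ + X]det_mk_tr.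
Qed.

Lemma det_mk0 f : \det (mk 0 f) = 1.
Proof. exact: det_mx00. Qed.

Lemma det_mk1 f : \det (mk 1 f) = f 0%N 0%N.
Proof. by rewrite (row1_mk (i0:=0) (j0:=0)) // ?det_mk0 ?mulr1 // => -[]. Qed.

Lemma sign_even k : (-1) ^+ (k + k) = 1 :> R.
Proof. by rewrite -signr_odd addnn odd_double. Qed.
Lemma sign_odd k : (-1) ^+ (k + k.+1) = -1 :> R.
Proof. by rewrite addnS -signr_odd /= addnn odd_double. Qed.

Lemma hess (f : nat -> nat -> R) c w m : (forall i, f i i.+1 = c) ->
  (forall i j, (i.+1 < j)%N -> f i j = 0) ->
  \det (mk m.+1 (fun i j => if i == m then w j else f i j)) =
  \sum_(i < m.+1) (-c) ^+ (m - i) * w i * \det (mk i f).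
Proof.
move=> Hc H0; elim: m w => [|m IH] w.
  by rewrite det_mk1 big_ord1 /= det_mk0 expr0 !mul1r mulr1.
rewrite (det_mk_split_col (j0 := m.+1) (u := fun i => if i == m.+1 then w m.+1 else 0)
   (v := fun i => if i == m.+1 then 0 else f i m.+1)) //; last first.
  by move=> i _; case: eqP => _; rewrite ?addr0 ?add0r.
have E1 : \det (mk m.+2 (fun i j => if j == m.+1 then (if i == m.+1 then w m.+1 else 0)
            else (if i == m.+1 then w j else f i j))) = w m.+1 * \det (mk m.+1 f).
  rewrite (row1_col (i0:=m.+1) (j0:=m.+1)) //; last first.
    by move=> i _ /negbTE ->; rewrite eqxx.
  rewrite !eqxx sign_even mul1r /=; congr (_ * \det _).
  apply: eq_mk => x y Hx Hy; rewrite /bump.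
  have -> : (m.+1 <= y)%N = false by lia.
  have -> : (m.+1 <= x)%N = false by lia.
  by rewrite !add0n !ifN // neq_ltn ?Hx ?Hy.
have E2 : \det (mk m.+2 (fun i j => if j == m.+1 then (if i == m.+1 then 0 else f i m.+1)
            else (if i == m.+1 then w j else f i j))) =
          - c * \det (mk m.+1 (fun i j => if i == m then w j else f i j)).
  rewrite (row1_col (i0:=m) (j0:=m.+1)) //; last first.
    move=> i Hi Him; rewrite eqxx; case: eqP => // /eqP Hi1; apply: H0; lia.
  rewrite eqxx ifN; last by rewrite neq_ltn ltnSn.
  rewrite Hc sign_odd mulN1r mulrN -mulNr /=; congr (_ * \det _).
  apply: eq_mk => x y Hx Hy; rewrite /bump; have -> : (m.+1 <= y)%N = false by lia.
  rewrite add0n ifN; last by rewrite neq_ltn Hy.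
  case: (ltnP x m) => Hxm.
    rewrite add0n !ifN //; apply/eqP; lia.
  have Ex : x = m by lia.
  by subst x; rewrite add1n !eqxx.
rewrite E1 E2 IH [in RHS]big_ord_recr /= subnn expr0 mul1r addrC; congr (_ + _).
rewrite mulr_sumr; apply: eq_bigr => i _.
rewrite subSn ?exprS; last by rewrite -ltnS ltn_ord.
ring.
Qed.

Lemma bump_ge i x : (i <= x)%N -> bump i x = x.+1.
Proof. by rewrite /bump => ->. Qed.
Lemma bump_lt i x : (x < i)%N -> bump i x = x.
Proof. by move=> H; rewrite /bump leqNgt H. Qed.

Lemma det_couple n r f : (0 < r)%N -> (r < n)%N ->
 (forall i j, (i < r)%N -> (r <= j)%N -> (j < n)%N -> (i != r.-1) || (j != r) -> f i j = 0) ->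
 (forall i j, (j < r)%N -> (r <= i)%N -> (i < n)%N -> (i != r) || (j != r.-1) -> f i j = 0) ->
 \det (mk n f) = \det (mk r f) * \det (mk (n - r)%N (fun i j => f (r + i)%N (r + j)%N))
   - f r.-1 r * f r r.-1 * (\det (mk r.-1 f) * \det (mk (n - r)%N.-1 (fun i j => f (r.+1 + i)%N (r.+1 + j)%N))).
Proof.
case: r => [//|r1] _ Hrn HU HL /=.
rewrite (det_mk_split (i0 := r1) (u := fun j => if j == r1.+1 then 0 else f r1 j)
   (v := fun j => if j == r1.+1 then f r1 r1.+1 else 0)); first last.
- by move=> j _; case: eqP => [->|_]; rewrite ?addr0 ?add0r.
- lia.
have E1 : \det (mk n (fun i j => if i == r1 then (if j == r1.+1 then 0 else f r1 j) else f i j))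
   = \det (mk r1.+1 f) * \det (mk (n - r1.+1)%N (fun i j => f (r1.+1 + i)%N (r1.+1 + j)%N)).
  rewrite (det_lblock_mk (r := r1.+1)); first last.
  - move=> i j Hi Hj Hjn; case: eqP => [Ei|/eqP Ei].
      subst i; case: eqP => // /eqP Hj1; apply: HU => //; by rewrite Hj1 orbT.
    by apply: HU => //; rewrite Ei.
  - exact: ltnW.
  congr (_ * _); congr (\det _); apply: eq_mk => x y Hx Hy.
    case: eqP => [->|//]; rewrite ifN //; apply/eqP; lia.
  rewrite ifN //; apply/eqP; lia.
have E2 : \det (mk n (fun i j => if i == r1 then (if j == r1.+1 then f r1 r1.+1 else 0) else f i j))
   = - (f r1 r1.+1 * f r1.+1 r1 * (\det (mk r1 f) *
        \det (mk (n - r1.+1)%N.-1 (fun i j => f (r1.+2 + i)%N (r1.+2 + j)%N)))).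
  rewrite (row1_mk (i0 := r1) (j0 := r1.+1)) //; last first.
    by move=> j _ /negbTE ->; rewrite eqxx.
  1: lia.
  rewrite !eqxx sign_odd.
  rewrite (det_ublock_mk (r := r1)); first last.
  - move=> x y Hy Hx Hxn; rewrite (bump_ge Hx) (@bump_lt r1.+1 y); last lia.
    rewrite ifN; last by apply/eqP; lia.
    apply: HL; try lia; apply/orP; right; apply/eqP; lia.
  - lia.
  rewrite [\det (mk (n.-1 - r1) _)](det_ublock_mk (r := 1)); first last.
  - move=> x y Hy Hx Hxn; rewrite (@bump_ge r1 (r1 + x)); last lia.
    rewrite (@bump_lt r1.+1 (r1 + y)); last lia.
    rewrite ifN; last by apply/eqP; lia.
    apply: HL; try lia; apply/orP; left; apply/eqP; lia.
  - lia.
  rewrite det_mk1 addn0 (bump_ge (leqnn _)) (@bump_lt r1.+1 r1) // ifN; last by apply/eqP; lia.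
  have -> : (n.-1 - r1 - 1 = (n - r1.+1).-1)%N by lia.
  have -> : mk r1 (fun x y => if bump r1 x == r1 then
        (if bump r1.+1 y == r1.+1 then f r1 r1.+1 else 0) else f (bump r1 x) (bump r1.+1 y))
     = mk r1 f.
    apply: eq_mk => x y Hx Hy; rewrite (bump_lt Hx) (@bump_lt r1.+1 y); last lia.
    rewrite ifN //; apply/eqP; lia.
  have -> : mk (n - r1.+1)%N.-1 (fun x y => if bump r1 (r1 + (1 + x))%N == r1 then
        (if bump r1.+1 (r1 + (1 + y))%N == r1.+1 then f r1 r1.+1 else 0)
        else f (bump r1 (r1 + (1 + x))%N) (bump r1.+1 (r1 + (1 + y))%N))
     = mk (n - r1.+1)%N.-1 (fun i j => f (r1.+2 + i)%N (r1.+2 + j)%N).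
    apply: eq_mk => x y Hx Hy; rewrite (@bump_ge r1 (r1 + (1 + x))%N); last lia.
    rewrite (@bump_ge r1.+1 (r1 + (1 + y))%N); last lia.
    rewrite ifN; last by apply/eqP; lia.
    congr (f _ _); lia.
  ring.
rewrite E1 E2 /=; ring.
Qed.
End Det.
Ltac ent_tac := rewrite /ent; repeat (let H := fresh in case: eqP => H; try (exfalso; lia)); try reflexivity.

Section Ent.
Variable R : comNzRingType.
Variable a : R.
Lemma ent_shift c x y : ent a (c + x) (c + y) = ent a x y.
Proof. ent_tac. all: try reflexivity. Qed.
Lemma ent_L i m : (i <= m)%N -> ent a i.+1 m = - ent a m i.
Proof. move=> Him. ent_tac. all: rewrite ?opprK ?oppr0 //. Qed.
Definition pc (i : nat) : R := (i == 0)%:R + a * (i == 1)%:R + a * (i == 2)%:R + (i == 3)%:R.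
Lemma ent_rec j m : (j <= m)%N -> pc (m.+1 - j) + (-1) ^+ (m - j) * ent a m j = 0.
Proof.
move=> Hjm; have [t Et] : exists t, m = (j + t)%N by exists (m - j)%N; lia.
subst m; clear Hjm; rewrite !(addKn, subSn) ?leq_addr //= /pc.
case: t => [|[|[|t]]]; rewrite ?addn0 ?addn1 ?addn2 ?addn3 /=; ent_tac; rewrite /=; ring.
Qed.
End Ent.
Section DD.
Variable R : comNzRingType.
Variable a : R.
Definition dn n := \det (mk n (ent a)).
Definition ln n := \det (mk n (fun i j => ent a i.+1 j)).

Lemma dd_pos m : dd a (Posz m) = dn m.
Proof. by case: m => [|m] //; rewrite /dn det_mk0. Qed.
Lemma dd_neg m : dd a (Negz m) = 0.
Proof. by []. Qed.

Lemma dn_rec m : dn m.+1 = \sum_(i < m.+1) (-1)^+(m - i) * ent a m i * dn i.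
Proof.
rewrite /dn (_ : mk m.+1 (ent a) = mk m.+1 (fun i j => if i == m then ent a m j else ent a i j)).
  by rewrite (hess (c := 1)) // => [i|i j Hij]; ent_tac.
by apply: eq_mk => i j _ _; case: eqP => [->|].
Qed.

Lemma ln_rec m : ln m.+1 = \sum_(i < m.+1) ent a i.+1 m * ln i.
Proof.
rewrite /ln det_mk_tr.
rewrite (_ : mk m.+1 _ = mk m.+1 (fun i j => if i == m then ent a j.+1 m else ent a j.+1 i)).
  rewrite (hess (c := -1)) // => [|i|i j Hij]; last by ent_tac.
  - apply: eq_bigr => i _; rewrite opprK expr1n mul1r det_mk_tr //.
  - by ent_tac.
by apply: eq_mk => i j _ _; case: eqP => [->|].
Qed.

Lemma sq_sign i : (-1) ^+ i * (-1) ^+ i = 1 :> R.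
Proof. by rewrite -exprD addnn -signr_odd odd_double. Qed.
Lemma sign_sub i m : (i <= m)%N -> (-1) ^+ (m - i) = (-1) ^+ m * (-1) ^+ i :> R.
Proof. by move=> H; rewrite -{2}(subnK H) exprD -mulrA sq_sign mulr1. Qed.

Lemma ln_dn m : ln m = (-1) ^+ m * dn m.
Proof.
elim: m {-2}m (leqnn m) => [|m IH] k Hk.
  have -> : k = 0%N by lia.
  by rewrite /ln /dn !det_mk0 mulr1.
case: k Hk => [|k] Hk; first by rewrite /ln /dn !det_mk0 mulr1.
rewrite ln_rec dn_rec mulr_sumr; apply: eq_bigr => i _.
rewrite IH; last by have := ltn_ord i; lia.
rewrite ent_L; last by have := ltn_ord i; rewrite ltnS.
rewrite sign_sub; last by have := ltn_ord i; rewrite ltnS.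
rewrite exprS.
have E := sq_sign k.
transitivity (- ent a k i * (-1) ^+ i * dn i * ((-1) ^+ k * (-1) ^+ k)); last by ring.
by rewrite E mulr1; ring.
Qed.

Lemma Ek_mk n k : (1 <= k <= n.+1)%N -> Ekmat a n k = mk n (fun i j => ent a (bump k.-1 i) j).
Proof.
move=> /andP[H1 H2]; apply/matrixP => i j; rewrite !mxE /= inordK //; lia.
Qed.

Lemma part1 n k : (1 <= k <= n.+1)%N ->
     \det (Ekmat a n k) =
     (-1) ^+ (n.+1 - k) *
       (dd a (k%:Z - 1) * dd a (n%:Z - k%:Z + 1)
        - dd a (k%:Z - 2) * dd a (n%:Z - k%:Z)).
Proof.
move=> Hk; rewrite Ek_mk //; case/andP: Hk => H1 H2.
case: k H1 H2 => [//|r] _ H2; rewrite subSS.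
have Er : (r.+1%:Z - 1 = r%:Z)%R by lia.
rewrite Er dd_pos.
case: r Er H2 => [|r] _ H2.
  have -> : (n%:Z - 1%:Z + 1 = n%:Z)%R by lia.
  have -> : (1%:Z - 2 = Negz 0)%R by lia.
  rewrite dd_pos dd_neg mul0r subr0 subn0 /dn det_mk0 mul1r.
  rewrite -ln_dn /ln; congr (\det _); apply: eq_mk => i j _ _; by rewrite bump0.
case: (ltnP r.+1 n) => Hrn; last first.
  have En : n = r.+1 by lia.
  subst n; rewrite subnn expr0 mul1r.
  have -> : ((r.+1)%:Z - (r.+2)%:Z + 1 = 0%:Z)%R by lia.
  have -> : ((r.+1)%:Z - (r.+2)%:Z = Negz 0)%R by lia.
  rewrite dd_pos dd_neg mulr0 subr0 /dn det_mk0 mulr1.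
  congr (\det _); apply: eq_mk => i j Hi _; by rewrite bump_lt.
have -> : (n%:Z - (r.+2)%:Z + 1 = (n - r.+1)%N%:Z)%R by lia.
have -> : ((r.+2)%:Z - 2 = r%:Z)%R by lia.
have -> : (n%:Z - (r.+2)%:Z = (n - r.+2)%N%:Z)%R by lia.
rewrite !dd_pos.
rewrite (det_couple (r := r.+1)) //=; last 2 first.
- move=> i j X1 X2 X3 /orP[/eqP Hne|/eqP Hne]; rewrite bump_lt //; ent_tac.
- move=> i j X1 X2 X3 /orP[/eqP Hne|/eqP Hne]; rewrite bump_ge //; ent_tac.
rewrite (bump_lt (ltnSn r)) (bump_ge (leqnn _)).
have -> : ent a r r.+1 = 1 by ent_tac.
have -> : ent a r.+2 r = -1 by ent_tac.
have -> : mk r.+1 (fun i => ent a (bump r.+1 i)) = mk r.+1 (ent a).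
  by apply: eq_mk => i j Hi _; rewrite bump_lt.
have -> : mk r (fun i => ent a (bump r.+1 i)) = mk r (ent a).
  by apply: eq_mk => i j Hi _; rewrite bump_lt // ltnW.
have -> : mk (n - r.+1) (fun i j => ent a (bump r.+1 (r.+1 + i)) (r.+1 + j)) =
   mk (n - r.+1) (fun i j => ent a i.+1 j).
  by apply: eq_mk => i j _ _; rewrite bump_ge ?leq_addr // -addnS ent_shift.
have -> : mk (n - r.+1).-1 (fun i j => ent a (bump r.+1 (r.+2 + i)) (r.+2 + j)) =
   mk (n - r.+1).-1 (fun i j => ent a i.+1 j).
  by apply: eq_mk => i j _ _; rewrite bump_ge; [rewrite -addnS ent_shift|lia].
rewrite -/(dn r.+1) -/(dn r) -/(ln (n - r.+1)) -/(ln (n - r.+1).-1) !ln_dn.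
have [s1 Es] : exists s1, (n - r.+1 = s1.+1)%N by exists (n - r.+2)%N; lia.
have Es2 : (n - r.+2 = s1)%N by lia.
rewrite Es Es2 /= exprS; ring.
Qed.

Fixpoint et (k : nat) : R * R * R := match k with
  | 0 => (1, -a, a ^+ 2 - a)
  | k.+1 => let: (x, y, z) := et k in (y, z, - a * z - a * y - x) end.
Definition e k := (et k).1.1.


Lemma e0 : e 0 = 1. Proof. by []. Qed.
Lemma e1 : e 1 = - a. Proof. by []. Qed.
Lemma e2 : e 2 = a ^+ 2 - a. Proof. by []. Qed.
Lemma e3 k : e k.+3 = - a * e k.+2 - a * e k.+1 - e k.
Proof. by rewrite /e /=; case: (et k) => [[x y] z]. Qed.

Lemma rec3_e x : x 0%N = 1 -> x 1%N = - a -> x 2%N = a ^+ 2 - a ->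
  (forall k, x k.+3 = - a * x k.+2 - a * x k.+1 - x k) -> forall k, x k = e k.
Proof.
move=> H0 H1 H2 H3.
suff : forall k, [/\ x k = e k, x k.+1 = e k.+1 & x k.+2 = e k.+2] by move=> H k; case: (H k).
elim => [|k [IH0 IH1 IH2]]; first by split.
by split => //; rewrite H3 e3 IH0 IH1 IH2.
Qed.

Lemma good_e x : x 0%N = 1 ->
  (forall k, \sum_(j < k.+2) pc a (k.+1 - j) * x j = 0) -> forall k, x k = e k.
Proof.
move=> H0 H.
have H1 : x 1%N = - a.
  move: (H 0%N); rewrite !big_ord_recr big_ord0 /= /pc /= H0 => E.
  by rewrite -[LHS]subr0 -E; ring.
apply: rec3_e => //.
- move: (H 1%N); rewrite !big_ord_recr big_ord0 /= /pc /= H0 H1 => E.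
  by rewrite -[LHS]subr0 -E; ring.
- move=> k; move: (H k.+2); rewrite !big_ord_recr /= big1; last first.
    move=> j _; rewrite /pc.
    have Hj := ltn_ord j.
    have -> : ((k.+3 - j)%N == 0) = false by apply/eqP; lia.
    have -> : ((k.+3 - j)%N == 1) = false by apply/eqP; lia.
    have -> : ((k.+3 - j)%N == 2) = false by apply/eqP; lia.
    have -> : ((k.+3 - j)%N == 3) = false by apply/eqP; lia.
    by rewrite /= !mulr0 !addr0 mul0r.
  have -> : (k.+3 - k = 3)%N by lia.
  have -> : (k.+3 - k.+1 = 2)%N by lia.
  have -> : (k.+3 - k.+2 = 1)%N by lia.
  rewrite subnn /pc /= => E.
  by rewrite -[LHS]subr0 -E; ring.
Qed.
Lemma dn_e k : dn k = e k.
Proof.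
apply: good_e => [|m]; first by rewrite /dn det_mk0.
rewrite big_ord_recr /= subnn dn_rec.
have -> : pc a 0 = 1 by rewrite /pc /=; ring.
rewrite mul1r -big_split /= big1 // => i _.
have Hi : (i <= m)%N by rewrite -ltnS ltn_ord.
by rewrite -mulrDl ent_rec ?mul0r.
Qed.
End DD.
Section Cplx.
Variable F : fieldType.
Variable a : F.

Lemma root_z (x : F) : x ^+ 3 + a * x ^+ 2 + a * x + 1 = 0 ->
  x != 0 /\ (x^-1) ^+ 3 + a * (x^-1) ^+ 2 + a * x^-1 + 1 = 0.
Proof.
move=> H.
have x0 : x != 0.
  apply/eqP => x0; move: H; rewrite x0 !expr0n /= mulr0 !add0r => /eqP; by rewrite oner_eq0.
split => //.
have -> : (x^-1) ^+ 3 + a * (x^-1) ^+ 2 + a * x^-1 + 1 = (x ^+ 3 + a * x ^+ 2 + a * x + 1) / x ^+ 3.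
  by field.
by rewrite H mul0r.
Qed.

Lemma zrec (z : F) k : z ^+ 3 + a * z ^+ 2 + a * z + 1 = 0 ->
  z ^+ k.+4 = - a * z ^+ k.+3 - a * z ^+ k.+2 - z ^+ k.+1.
Proof.
move=> H; apply/eqP; rewrite -subr_eq0.
have -> : z ^+ k.+4 - (- a * z ^+ k.+3 - a * z ^+ k.+2 - z ^+ k.+1) = z ^+ k.+1 * (z ^+ 3 + a * z ^+ 2 + a * z + 1).
  by rewrite !exprS; ring.
by rewrite H mulr0.
Qed.

Lemma root_R (x : F) : x ^+ 3 + a * x ^+ 2 + a * x + 1 = 0 ->
  [/\ x^-1 = - (x ^+ 2 + a * x + a), (x^-1) ^+ 2 = - (x + a) - a * x^-1 &
       (x^-1) ^+ 3 = - 1 - a * (x^-1) ^+ 2 - a * x^-1].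
Proof.
move=> H; have [x0 Z] := root_z H; split.
- apply/eqP; rewrite -subr_eq0.
  have -> : x^-1 - - (x ^+ 2 + a * x + a) = (x ^+ 3 + a * x ^+ 2 + a * x + 1) / x by field.
  by rewrite H mul0r.
- apply/eqP; rewrite -subr_eq0.
  have -> : (x^-1) ^+ 2 - (- (x + a) - a * x^-1) = (x ^+ 3 + a * x ^+ 2 + a * x + 1) / x ^+ 2 by field.
  by rewrite H mul0r.
- apply/eqP; rewrite -subr_eq0.
  have -> : (x^-1) ^+ 3 - (- 1 - a * (x^-1) ^+ 2 - a * x^-1) = (x^-1) ^+ 3 + a * (x^-1) ^+ 2 + a * x^-1 + 1 by ring.
  by rewrite Z.
Qed.

Lemma part3_F (al be ga : F) : al != be -> be != ga -> al != ga ->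
     al ^+ 3 + a * al ^+ 2 + a * al + 1 = 0 ->
     be ^+ 3 + a * be ^+ 2 + a * be + 1 = 0 ->
     ga ^+ 3 + a * ga ^+ 2 + a * ga + 1 = 0 ->
     forall k : nat,
       e a k =
         (al ^+ k.+1 * (al - be) * (ga - al))^-1
       + (be ^+ k.+1 * (al - be) * (be - ga))^-1
       + (ga ^+ k.+1 * (ga - al) * (be - ga))^-1.
Proof.
move=> Hab Hbg Hag Ha Hb Hg.
have [a0 Za] := root_z Ha; have [b0 Zb] := root_z Hb; have [g0 Zg] := root_z Hg.
have [R1a R2a R3a] := root_R Ha; have [R1b R2b R3b] := root_R Hb; have [R1g R2g R3g] := root_R Hg.
have ab : al - be != 0 by rewrite subr_eq0.
have bg : be - ga != 0 by rewrite subr_eq0.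
have ga' : ga - al != 0 by rewrite subr_eq0 eq_sym.
set t := fun k : nat => ((al - be) * (ga - al))^-1 * (al^-1) ^+ k.+1
   + ((al - be) * (be - ga))^-1 * (be^-1) ^+ k.+1 + ((ga - al) * (be - ga))^-1 * (ga^-1) ^+ k.+1.
move=> k; have -> : (al ^+ k.+1 * (al - be) * (ga - al))^-1
       + (be ^+ k.+1 * (al - be) * (be - ga))^-1
       + (ga ^+ k.+1 * (ga - al) * (be - ga))^-1 = t k.
  rewrite /t !exprVn; field.
  by rewrite ab bg ga' !expf_neq0.
symmetry; move: k; apply: (rec3_e (x := t)).
- rewrite /t !expr1 R1a R1b R1g; field; by rewrite ab bg ga'.
- rewrite /t R2a R2b R2g R1a R1b R1g; field; by rewrite ab bg ga'.
- rewrite /t R3a R3b R3g R2a R2b R2g R1a R1b R1g; field; by rewrite ab bg ga'.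
- move=> k; rewrite /t (zrec k Za) (zrec k Zb) (zrec k Zg); ring.
Qed.
End Cplx.
Import numFieldNormedType.Exports.
Local Open Scope classical_set_scope.
Local Open Scope ring_scope.
Section Ana.
Variable R : realType.
Variable a : R.
Definition pp : {poly R} := 1 + a *: 'X + a *: 'X^2 + 'X^3.
Lemma ppE x : pp.[x] = 1 + a * x + a * x ^+ 2 + x ^+ 3.
Proof. by rewrite /pp !hornerE. Qed.
Definition f0 := fun x : R => (1 + a * x + a * x ^+ 2 + x ^+ 3)^-1.
Definition h j := derive1n j f0.
Definition g (y : R) := (pp.[y])^-1.

Lemma near_p x : pp.[x] != 0 -> \forall y \near x, pp.[y] != 0.
Proof. move=> H; have := @cvgr_neq0 _ _ _ _ _ (horner pp) pp.[x] (@continuous_horner _ pp x) H. apply. Qed.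

Lemma g_derive x : pp.[x] != 0 -> is_derive x 1 g (- (pp.[x])^-2 * pp^`().[x]).
Proof.
move=> H.
have D : derivable (horner pp) x 1 by exact: derivable_horner.
apply: DeriveDef; first exact: (derivableV H D).
rewrite (deriveV H D) derive_val //.
Qed.

Fixpoint qs j : {poly R} := if j is j'.+1 then (qs j')^`() * pp - (j'.+1)%:R *: (qs j' * pp^`()) else 1.
Definition G j := fun y => (qs j).[y] * g y ^+ j.+1.

Lemma G_derive j x : pp.[x] != 0 -> is_derive x 1 (G j) (G j.+1 x).
Proof.
move=> Hx.
have H3 := is_deriveM (is_derive_poly (qs j) x) (is_deriveX j.+1 (g_derive Hx)).
have -> : G j = horner (qs j) * g ^+ j.+1 by rewrite mulrfctE exprfctE.
apply: (is_derive_eq H3).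
rewrite /G /= exprfctE.
have -> : ((qs j)^`() * pp - j.+1%:R *: (qs j * pp^`())).[x] =
   (qs j)^`().[x] * pp.[x] - j.+1%:R * ((qs j).[x] * pp^`().[x]).
  by rewrite hornerD hornerN hornerZ !hornerM.
have E : forall u v : R, u *: v = u * v by [].
rewrite !E /g.
move: (pp.[x]) Hx => P HP.
rewrite !exprS.
field.
done.
Qed.

Lemma h_G j x : pp.[x] != 0 -> h j x = G j x.
Proof.
elim: j x => [|j IH] x Hx.
  by rewrite /h /G /= hornerC mul1r expr1 /g ppE.
rewrite /h derive1nS -/(h j) derive1E.
rewrite (@near_eq_derive _ _ _ (h j) (G j) x 1); last first.
  by apply: filterS (near_p Hx) => y Hy; exact: IH.
by rewrite (@derive_val _ _ _ _ _ _ _ (G_derive j Hx)).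
Qed.

Lemma h_derive j x : pp.[x] != 0 -> is_derive x 1 (h j) (h j.+1 x).
Proof.
move=> Hx; rewrite (h_G j.+1 Hx).
apply: (near_eq_is_derive _ (G_derive j Hx)).
by apply: filterS (near_p Hx) => y Hy; rewrite h_G.
Qed.

Lemma pascal (H P : nat -> R) k :
  \sum_(j < k.+2) 'C(k.+1, j)%:R * H j * P (k.+1 - j)%N =
  \sum_(j < k.+1) 'C(k, j)%:R * (H j * P (k - j).+1 + P (k - j)%N * H j.+1).
Proof.
rewrite big_ord_recl /=.
under eq_bigr => i _ do rewrite /bump /= add1n binS natrD subSS.
under eq_bigr => i _ do rewrite !mulrDl.
rewrite big_split /=.
rewrite [RHS](eq_bigr (fun j : 'I_k.+1 => 'C(k, j)%:R * H j * P (k - j).+1 + 'C(k, j)%:R * H j.+1 * P (k - j)%N)); last first.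
  by move=> j _; ring.
rewrite big_split /= addrA; congr (_ + _).
rewrite [in RHS]big_ord_recl big_ord_recr /= !bin0 subn0 bin_small // mul0r mul0r addr0.
rewrite subn0; congr (_ + _); apply: eq_bigr => i _.
by rewrite /bump /= add1n subnSK.
Qed.


Lemma term_derive (F : R -> R) (dF c : R) (q : {poly R}) (x : R) : is_derive x (1:R) F dF ->
  is_derive x (1:R) (fun y => c * F y * q.[y]) (c * (F x * q^`().[x] + q.[x] * dF)).
Proof.
move=> HF.
have H := is_deriveM (is_deriveM (is_derive_cst c x 1) HF) (is_derive_poly q x).
have -> : (fun y => c * F y * q.[y]) = (cst c * F) * horner q by rewrite !mulrfctE.
apply: (is_derive_eq H).
have E : forall u v : R, u *: v = u * v by [].
rewrite !E mulrfctE /=; ring.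
Qed.

Definition S k := \sum_(j < k.+1) (fun y => 'C(k, j)%:R * h j y * (pp^`(k - j)).[y]).
Lemma S_eval k y : S k y = \sum_(j < k.+1) 'C(k, j)%:R * h j y * (pp^`(k - j)).[y].
Proof. by rewrite /S fct_sumE. Qed.

Lemma leib k x : pp.[x] != 0 -> S k x = (k == 0)%:R.
Proof.
elim: k x => [|k IH] x Hx.
  by rewrite S_eval big_ord1 /= bin0 mul1r /f0 -ppE mulVf.
have D := @is_derive_sum _ _ _ k.+1 (fun j : 'I_k.+1 => fun y => 'C(k, j)%:R * h j y * (pp^`(k - j)).[y]) x 1 _
   (fun j => term_derive ('C(k, j)%:R) (pp^`(k - j)) (h_derive j Hx)).
have D0 : 'D_1 (S k) x = 0.
  rewrite (@near_eq_derive _ _ _ (S k) (cst (k == 0)%:R) x 1) ?derive_cst //.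
  by apply: filterS (near_p Hx) => y Hy; rewrite IH.
have Z := @derive_val _ _ _ _ _ _ _ D.
have PA := pascal (fun j => h j x) (fun m => (pp^`(m)).[x]) k; simpl in PA.
rewrite S_eval PA.
transitivity ('D_1 (S k) x); last by rewrite D0.
rewrite Z; apply: eq_bigr => j _; by rewrite /h derive1nS.
Qed.

Lemma pp0 : pp.[0] = 1.
Proof. by rewrite ppE; ring. Qed.

Lemma coef_pp m : pp`_m = pc a m.
Proof. by rewrite /pp /pc !coefD coefZ coefX coefZ coefXn coefXn coef1. Qed.

Lemma ppderiv0 m : (pp^`(m)).[0] = pc a m * m`!%:R.
Proof. by rewrite horner_coef0 coef_derivn addn0 ffactnn coef_pp mulr_natr. Qed.

Lemma fact_neq0 m : (m`!%:R : R) != 0.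
Proof. by rewrite pnatr_eq0 -lt0n fact_gt0. Qed.

Definition cc j := h j 0 / j`!%:R.

Lemma cc_e k : cc k = e a k.
Proof.
apply: good_e => [|m].
  rewrite /cc /h /= /f0 fact0.
  have -> : (1 + a * 0 + a * 0 ^+ 2 + 0 ^+ 3 : R) = 1 by ring.
  by rewrite !invr1 mulr1.
have L := @leib m.+1 0; rewrite pp0 oner_neq0 in L.
have L' := L isT; rewrite S_eval in L'.
apply/eqP; rewrite -(mulrI_eq0 _ (lregP (fact_neq0 m.+1))); apply/eqP.
rewrite -[RHS]L' mulr_sumr; apply: eq_bigr => j _.
have Hj : (j <= m.+1)%N by rewrite -ltnS ltn_ord.
rewrite ppderiv0 /cc.
rewrite -(bin_fact Hj) !natrM.
field.
by rewrite !fact_neq0.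
Qed.

Lemma h0_e k : (k`!%:R)^-1 * h k 0 = e a k.
Proof. by rewrite -cc_e /cc mulrC. Qed.
End Ana.
Import numFieldNormedType.Exports.
Local Open Scope ring_scope.

Lemma e_rmorph (R S : comNzRingType) (f : {rmorphism R -> S}) (a : R) k : f (e a k) = e (f a) k.
Proof.
move: k; apply: (rec3_e (x := fun k => f (e a k))).
- by rewrite e0 rmorph1.
- by rewrite e1 rmorphN.
- by rewrite e2 rmorphB rmorphXn.
- by move=> k; rewrite e3 !rmorphB !rmorphM rmorphN.
Qed.

Theorem theorem2p3 (R : realType) (a : R) (ha : 0 < a) :
  (forall n k : nat, (1 <= n)%N -> (1 <= k <= n.+1)%N ->
     \det (Ekmat a n k) =
     (-1) ^+ (n.+1 - k) *
       (dd a (k%:Z - 1) * dd a (n%:Z - k%:Z + 1)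
        - dd a (k%:Z - 2) * dd a (n%:Z - k%:Z))) /\
  (forall k : nat,
     dd a k%:Z =
     (k`!%:R)^-1 *
       derive1n k (fun x : R => (1 + a * x + a * x ^+ 2 + x ^+ 3)^-1) 0) /\
  (forall alpha beta gamma : R[i],
     alpha != beta -> beta != gamma -> alpha != gamma ->
     alpha ^+ 3 + (a%:C)%C * alpha ^+ 2 + (a%:C)%C * alpha + 1 = 0 ->
     beta ^+ 3 + (a%:C)%C * beta ^+ 2 + (a%:C)%C * beta + 1 = 0 ->
     gamma ^+ 3 + (a%:C)%C * gamma ^+ 2 + (a%:C)%C * gamma + 1 = 0 ->
     forall k : nat, (1 <= k)%N ->
       ((dd a k%:Z)%:C)%C =
         (alpha ^+ k.+1 * (alpha - beta) * (gamma - alpha))^-1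
       + (beta ^+ k.+1 * (alpha - beta) * (beta - gamma))^-1
       + (gamma ^+ k.+1 * (gamma - alpha) * (beta - gamma))^-1).
Proof.
split; [|split].
- by move=> n k _ Hk; exact: part1.
- by move=> k; rewrite dd_pos dn_e -h0_e.
- move=> al be ga Hab Hbg Hag Ha Hb Hg k _.
  rewrite dd_pos dn_e (e_rmorph (real_complex R)).
  exact: part3_F.
Qed.
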